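(* Let $k$ and $M$ be positive integers, and let $M=p_{1}^{e_{1}}p_{2}^{e_{2}}\cdots p_{l}^{e_{l}}$ be the prime factorization of $M$, where $p_1,\dots,p_l$ are distinct primes. For any integer $n\geq \max\{e_j\mid 1\le j\le l\}$, \[ \sum_{i=0}^{\varphi(M)-1}B^{(-k)}_{n+i}\equiv \sum_{i=0}^{\varphi(M)-1}B^{(-n-i)}_{k}\equiv 0\pmod{M}. \]
   Context: For any integer $k$, let $\mathrm{Li}_k(t)=\sum_{n=1}^{\infty} t^n/n^k$. The poly-Bernoulli numbers $B^{(k)}_n$ ($n\ge 0$) are defined by $\frac{\mathrm{Li}_k(1-e^{-t})}{1-e^{-t}}=\sum_{n=0}^{\infty}B^{(k)}_n\frac{t^n}{n!}$. For negative upper index these are integers. $\varphi$ denotes Euler's totient function. *)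

(* Defs.v *)
From mathcomp Require Import all_boot all_order all_algebra.
Set Implicit Arguments. Unset Strict Implicit. Unset Printing Implicit Defensive.
Import Order.TTheory GRing.Theory Num.Theory.
Local Open Scope ring_scope.

Definition one_minus_exp_neg_trunc (N : nat) : {poly rat} :=
  \sum_(1 <= i < N.+1) ((-1) ^+ i.+1 / (i`!)%:R) *: 'X^i.

(* Li_{-k}(x)/x = sum_{m>=0} (m+1)^k x^m  (formal power series in x).
   Since x = 1 - e^{-t} has zero constant term, the coefficient of t^n of
   Li_{-k}(1-e^{-t})/(1-e^{-t}) only involves the terms m <= n and the
   truncation of 1 - e^{-t} at degree n.  Hence
   polyBneg k n = B_n^{(-k)} = n! * [t^n] Li_{-k}(1-e^{-t})/(1-e^{-t}). *)
Definition polyBneg (k n : nat) : rat :=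
  (n`!)%:R *
  (\sum_(0 <= m < n.+1) ((m.+1 ^ k)%:R) *: (one_minus_exp_neg_trunc n) ^+ m)`_n.

(* Main.v *)
Require Import Defs.
From mathcomp Require Import all_boot all_order all_algebra.
From mathcomp Require Import all_solvable.
From mathcomp Require Import zify ring lra.
Set Implicit Arguments. Unset Strict Implicit. Unset Printing Implicit Defensive.

Lemma geo_split x y a : \sum_(i < x * y) a ^ i = (\sum_(i < x) a ^ i) * \sum_(r < y) (a ^ x) ^ r.
Proof.
elim: y => [|y IH]; first by rewrite muln0 !big_ord0 muln0.
rewrite mulnS addnC big_split_ord /= IH big_ord_recr /= mulnDr; congr (_ + _).
rewrite big_distrl /=; apply: eq_bigr => i _; rewrite -expnM expnD mulnC; congr (_ * _).
Qed.

Lemma one_mod p m k : p %| m -> (m.+1) ^ k = 1 %[mod p].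
Proof.
case/dvdnP=> q ->; rewrite -modnXm -addn1 modnMDl modnXm exp1n //.
Qed.

Lemma geo_p p m j : p %| m -> p ^ j %| \sum_(i < p ^ j) m.+1 ^ i.
Proof.
move=> pm; elim: j => [|j IH]; first by rewrite expn0 big_ord_recl big_ord0.
rewrite expnSr geo_split dvdn_mul //.
have h : forall r, p %| (m.+1 ^ p ^ j) ^ r - 1.
  move=> r; rewrite -eqn_mod_dvd ?expn_gt0 //; rewrite -expnM; apply/eqP; exact: one_mod.
have -> : \sum_(r < p) (m.+1 ^ p ^ j) ^ r = \sum_(r < p) ((m.+1 ^ p ^ j) ^ r - 1) + \sum_(r < p) 1.
  rewrite -big_split /=; apply: eq_bigr => r _; rewrite subnK // !expn_gt0 //.
rewrite big_const_ord iter_addn_0 mul1n dvdn_add //; exact: dvdn_sum.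
Qed.

Lemma geo_gen p m j N : p %| m -> p ^ j %| N -> p ^ j %| \sum_(i < N) m.+1 ^ i.
Proof.
move=> pm /dvdnP[c ->]; rewrite mulnC geo_split; apply: dvdn_mulr; exact: geo_p.
Qed.

Lemma geo_closed m N : m * \sum_(i < N) m.+1 ^ i = m.+1 ^ N - 1.
Proof.
elim: N => [|N IH]; first by rewrite big_ord0 muln0 expn0.
rewrite big_ord_recr /= mulnDr IH expnS.
have : 0 < m.+1 ^ N by rewrite expn_gt0.
set t := m.+1 ^ N; nia.
Qed.

Lemma totient_part p M : 0 < M -> p \in primes M -> (p.-1 * p ^ (logn p M).-1) %| totient M.
Proof.
move=> hM hp; rewrite totientE // (big_rem p) //=; exact: dvdn_mulr.
Qed.

Lemma keyC M n m U : 0 < M -> (forall p, p \in primes M -> logn p M <= n) ->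
  (m = 0 -> U = 0) -> m`! %| U -> M %| U * \sum_(i < totient M) m.+1 ^ (n + i).
Proof.
move=> hM hn hm0 hU.
have [->|U0] := posnP U; first by rewrite mul0n dvdn0.
case: m hm0 hU => [h|m' _]; first by rewrite h in U0.
set m := m'.+1 => hU.
apply/(dvdn_partP _ hM) => p pM.
have pM' : p \in primes M by [].
have pr : prime p by move: pM'; rewrite mem_primes => /andP[].
rewrite p_part; set e := logn p M.
have e0 : 0 < e by rewrite logn_gt0.
have hen : e <= n by apply: hn.
have hs : \sum_(i < totient M) m.+1 ^ (n + i) = m.+1 ^ n * \sum_(i < totient M) m.+1 ^ i.
  by rewrite big_distrr /=; apply: eq_bigr => i _; rewrite expnD.
have [pa|npa] := boolP (p %| m.+1).
  apply: dvdn_mull; apply: dvdn_sum => i _.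
  apply: dvdn_trans (dvdn_exp2l _ (leq_trans hen (leq_addr i n))) _.
  exact: dvdn_exp2r.
have [pm|npm] := boolP (p %| m).
  have -> : p ^ e = p * p ^ e.-1 by rewrite -expnS prednK.
  apply: dvdn_mul.
    apply: dvdn_trans pm _; apply: dvdn_trans _ hU; by apply: dvdn_fact; rewrite /m leqnn.
  rewrite hs; apply: dvdn_mull; apply: geo_gen => //.
  exact: dvdn_trans (dvdn_mull _ (dvdnn _)) (totient_part hM pM').
apply: dvdn_mull.
have co : coprime (p ^ e) m by rewrite coprime_pexpl // prime_coprime.
rewrite -(Gauss_dvdr _ co) hs mulnCA geo_closed; apply: dvdn_mull.
have co2 : coprime m.+1 (p ^ e) by rewrite coprime_sym coprime_pexpl // prime_coprime.
have eu := Euler_exp_totient co2.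
rewrite -eqn_mod_dvd ?expn_gt0 //.
have /dvdnP[c ->] : totient (p ^ e) %| totient M.
  rewrite totient_pfactor //; exact: totient_part.
by rewrite mulnC expnM -modnXm eu modnXm exp1n.
Qed.

Set Implicit Arguments. Unset Strict Implicit. Unset Printing Implicit Defensive.
Import Order.TTheory GRing.Theory Num.Theory.
Local Open Scope ring_scope.

Definition W (g : nat -> int) (j : nat) : int :=
  \sum_(l < j.+1) (-1) ^+ l * ('C(j, l))%:R * g l.

Lemma W_ext g h j : (forall l, g l = h l) -> W g j = W h j.
Proof. by move=> e; apply: eq_bigr => i _; rewrite e. Qed.

Lemma W_lin a b g h j : W (fun l => a * g l + b * h l) j = a * W g j + b * W h j.
Proof.
rewrite /W !mulr_sumr -big_split /=; apply: eq_bigr => i _; ring.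
Qed.

Lemma W0 g : W g 0 = g 0%N.
Proof. by rewrite /W big_ord_recl big_ord0 /= addr0 expr0 mul1r bin0 mul1r. Qed.

Lemma WS g j : W g j.+1 = W g j - W (fun l => g l.+1) j.
Proof.
rewrite /W big_ord_recl [X in _ = X - _]big_ord_recl /=.
have -> : \sum_(i < j.+1) (-1) ^+ bump 0 i * ('C(j.+1, bump 0 i))%:R * g (bump 0 i)
  = \sum_(i < j.+1) (-1) ^+ i.+1 * ('C(j, i.+1))%:R * g i.+1
    - \sum_(i < j.+1) (-1) ^+ i * ('C(j, i))%:R * g i.+1.
  rewrite -sumrB; apply: eq_bigr => i _.
  rewrite /bump /= add1n binS natrD exprS; ring.
rewrite big_ord_recr /=.
rewrite (@bin_small j j.+1) //.
have e : forall i : 'I_j, bump 0 i = i.+1 by move=> i; rewrite /bump /= add1n.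
under [in RHS]eq_bigr do rewrite e.
rewrite mulr0 mul0r addr0 !bin0 !expr0 !mul1r addrA.
done.
Qed.

Lemma Wconst c j : W (fun _ => c) j = c * (j == 0%N)%:R.
Proof.
elim: j => [|j IH]; first by rewrite W0 mulr1.
by rewrite WS IH subrr mulr0.
Qed.

Lemma WX g j : W (fun l => l%:R * g l) j.+1 = - (j.+1)%:R * W (fun l => g l.+1) j.
Proof.
rewrite /W big_ord_recl /= mul0r mulr0 add0r mulr_sumr.
apply: eq_bigr => i _.
have h := mul_bin_diag j.+1 i; rewrite /= in h.
rewrite /bump /= add1n exprS.
have -> : (-1) * (-1) ^+ i * ('C(j.+1, i.+1))%:R * (i.+1%:R * g i.+1)
   = - (-1) ^+ i * ((i.+1 * 'C(j.+1, i.+1))%:R) * g i.+1 by rewrite natrM; ring.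
rewrite -h natrM; ring.
Qed.

Lemma Winv g m : W (W g) m = g m.
Proof.
elim: m g => [|m IH] g; first by rewrite !W0.
rewrite WS.
rewrite (@W_ext (fun l => W g l.+1) (fun l => 1 * W g l + (-1) * W (fun l => g l.+1) l)); last first.
  by move=> l; rewrite WS; ring.
by rewrite W_lin IH IH; ring.
Qed.

Definition u (m N : nat) : int := W (fun l => (- (l%:R)) ^+ N) m.

Lemma u_rec m N : u m.+1 N.+1 = (m.+1)%:R * (u m N - u m.+1 N).
Proof.
rewrite /u (@W_ext _ (fun l => l%:R * (- (- l%:R) ^+ N))); last first.
  by move=> l; rewrite exprSr; ring.
rewrite WX [X in _ = _ * (_ - X)]WS.
rewrite (@W_ext (fun l => - (- l.+1%:R) ^+ N) (fun l => (-1) * (- l.+1%:R) ^+ N + 0 * 0)); last first.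
  by move=> l; ring.
rewrite W_lin; ring.
Qed.

Lemma u_N0 m : u m 0 = (m == 0%N)%:R.
Proof. by rewrite /u (@W_ext _ (fun _ => 1)) // Wconst mul1r. Qed.

Lemma u_0S N : u 0 N.+1 = 0.
Proof. by rewrite /u W0 oppr0 expr0n. Qed.

Lemma u_van m N : (N < m)%N -> u m N = 0.
Proof.
elim: N m => [|N IH] [|m] //= h; first by rewrite u_N0.
by rewrite u_rec !IH ?subrr ?mulr0 // ltnW.
Qed.

Lemma u_fact m N : (((m`!)%:Z) %| u m N)%Z.
Proof.
elim: N m => [|N IH] m.
  by rewrite u_N0; case: m => [|m] //=; rewrite dvdz0.
case: m => [|m]; first by rewrite u_0S dvdz0.
rewrite u_rec factS PoszM.
apply: dvdz_mul; first by rewrite natz dvdzz.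
apply: rpredB; last first.
  apply: dvdz_trans (IH m.+1); rewrite factS PoszM; apply: dvdz_mull; exact: dvdzz.
exact: IH.
Qed.

Definition A (j N : nat) : int := (-1) ^+ j * W (fun l => (l.+1%:R) ^+ N) j.

Lemma A0 N : A 0 N = 1.
Proof. by rewrite /A W0 expr0 mul1r expr1n. Qed.

Lemma A_rec j N : A j.+1 N.+1 = (j.+2)%:R * A j.+1 N + (j.+1)%:R * A j N.
Proof.
rewrite /A.
rewrite (@W_ext _ (fun l => 1 * (l.+1%:R) ^+ N + 1 * (l%:R * (l.+1%:R) ^+ N))); last first.
  by move=> l; rewrite exprS -natr1; ring.
have ws := WS (fun l => (l.+1%:R : int) ^+ N) j; rewrite /= in ws.
rewrite W_lin WX.
have -> : W (fun l => (l.+2)%:R ^+ N) j = W (fun l => (l.+1%:R : int) ^+ N) j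
   - W (fun l => (l.+1%:R : int) ^+ N) j.+1 by rewrite ws; ring.
set a := W _ j.+1; set b := W _ j.
rewrite exprS -!natr1; ring.
Qed.

Lemma bin_id m j : (m.+1)%:R * ('C(m.+1, j.+1))%:R - m%:R * ('C(m, j.+1))%:R
  = (j.+2)%:R * ('C(m, j.+1))%:R + (j.+1)%:R * ('C(m, j))%:R :> int.
Proof.
have h := mul_bin_diag m.+1 j; rewrite /= binS in h.
have h' : (m.+1)%:R * ('C(m, j))%:R = (j.+1)%:R * (('C(m, j.+1))%:R + ('C(m, j))%:R) :> int.
  by rewrite -natrD -!natrM h.
rewrite binS natrD mulrDr h' -!natr1; ring.
Qed.

Lemma E_A j N : \sum_(m < N.+1) ('C(m, j))%:R * u m N = A j N.
Proof.
elim: N j => [|N IH] j.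
  rewrite big_ord_recl big_ord0 addr0 u_N0 /= mulr1 /A Wconst bin0n.
  by case: j => [|j] /=; rewrite ?mulr0 // !mulr1.
rewrite big_ord_recl u_0S mulr0 add0r.
have e : forall i : 'I_N.+1, ((lift ord0 i : 'I_N.+2) : nat) = i.+1.
  by move=> i; rewrite /= /bump /= add1n.
under eq_bigr do rewrite e u_rec.
have h2 : \sum_(i < N.+1) ('C(i.+1, j))%:R * ((i.+1)%:R * u i.+1 N)
   = \sum_(i < N.+1) ('C(i, j))%:R * (i%:R * u i N).
  rewrite big_ord_recr /= (@u_van N.+1 N) // !mulr0 addr0.
  rewrite [RHS]big_ord_recl /= !mul0r mulr0 add0r.
  by apply: eq_bigr => i _; rewrite /bump /= add1n.
have h3 : \sum_(i < N.+1) ('C(i.+1, j))%:R * ((i.+1)%:R * (u i N - u i.+1 N))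
  = \sum_(i < N.+1) (('C(i.+1, j))%:R * (i.+1)%:R - ('C(i, j))%:R * i%:R) * u i N.
  rewrite (eq_bigr (fun i : 'I_N.+1 => ('C(i.+1, j))%:R * (i.+1)%:R * u i N
     - ('C(i.+1, j))%:R * ((i.+1)%:R * u i.+1 N))); last by move=> i _; ring.
  rewrite sumrB h2 -sumrB; apply: eq_bigr => i _; ring.
rewrite h3; clear h2 h3.
case: j => [|j].
  transitivity (A 0 N); last by rewrite !A0.
  rewrite -IH; apply: eq_bigr => i _; rewrite !bin0 -natr1; ring.
rewrite A_rec -!IH !mulr_sumr -big_split /=; apply: eq_bigr => i _.
have -> : (('C(i.+1, j.+1))%:R * (i.+1)%:R - ('C(i, j.+1))%:R * i%:R : int)
  = (i.+1)%:R * ('C(i.+1, j.+1))%:R - i%:R * ('C(i, j.+1))%:R by ring.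
rewrite bin_id; ring.
Qed.

Lemma A_van j N : (N < j)%N -> A j N = 0.
Proof.
move=> h; rewrite -E_A big1 // => i _; rewrite bin_small ?mul0r //.
exact: leq_trans (ltn_ord i) h.
Qed.

Lemma sum_widen (F : nat -> int) n n' : (n <= n')%N ->
  (forall i, (n <= i)%N -> (i < n')%N -> F i = 0) ->
  \sum_(i < n) F i = \sum_(i < n') F i.
Proof.
move=> le h; rewrite -!(big_mkord xpredT) (@big_cat_nat _ _ _ n 0 n' _ _ (leq0n n) le) /=.
rewrite [X in _ = _ + X]big1_seq ?addr0 // => i /andP[_].
by rewrite mem_iota subnKC // => /andP[]; apply: h.
Qed.

Definition D (N K : nat) : int := \sum_(m < N.+1) u m N * (m.+1%:R) ^+ K.

Lemma D_AA N K B : (N < B)%N -> (K < B)%N -> D N K = \sum_(j < B) A j N * A j K.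
Proof.
move=> hN hK.
have e : forall m : 'I_N.+1, (m.+1%:R : int) ^+ K = \sum_(j < N.+1) ('C(m, j))%:R * A j K.
  move=> m.
  have := Winv (fun l => (l.+1%:R : int) ^+ K) m; rewrite /= => <-.
  rewrite {1}/W (@sum_widen (fun l => (-1) ^+ l * ('C(m, l))%:R * W (fun l => (l.+1%:R : int) ^+ K) l) m.+1 N.+1) ?ltn_ord //; last first.
    by move=> i hi _; rewrite bin_small // mulr0 mul0r.
  by apply: eq_bigr => j _; rewrite /A; ring.
rewrite /D; under eq_bigr do rewrite e mulr_sumr.
rewrite exchange_big /= -(@sum_widen (fun j => A j N * A j K) N.+1 B) //; last first.
  by move=> i hi _; rewrite A_van // mul0r.
apply: eq_bigr => j _; rewrite -(E_A j N) mulr_suml; apply: eq_bigr => i _; ring.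
Qed.

Lemma D_sym N K : D N K = D K N.
Proof.
rewrite (@D_AA N K (N + K).+1) ?ltnS ?leq_addr ?leq_addl //.
rewrite (@D_AA K N (N + K).+1) ?ltnS ?leq_addr ?leq_addl //.
by apply: eq_bigr => i _; rewrite mulrC.
Qed.
Lemma fact_neq0 n : (n`!)%:R != 0 :> rat.
Proof. by rewrite pnatr_eq0 -lt0n fact_gt0. Qed.

Lemma coef_x N j : (j <= N)%N -> (one_minus_exp_neg_trunc N)`_j =
  if j == 0%N then 0 else (-1) ^+ j.+1 / (j`!)%:R.
Proof.
move=> hj; rewrite /one_minus_exp_neg_trunc coef_sum.
under eq_bigr do rewrite coefZ coefXn.
case: eqP => [->|/eqP j0].
  by rewrite big1_seq // => i /andP[_]; rewrite mem_index_iota => /andP[hi _]; rewrite eq_sym gtn_eqF // mulr0.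
rewrite (bigD1_seq j) ?iota_uniq ?mem_index_iota ?lt0n ?j0 ?ltnS //= eqxx mulr1.
by rewrite big1_seq ?addr0 // => i /andP[hij _]; rewrite eq_sym (negbTE hij) mulr0.
Qed.

Lemma coef_e N j : (j <= N)%N -> (1 - one_minus_exp_neg_trunc N)`_j = (-1) ^+ j / (j`!)%:R.
Proof.
move=> hj; rewrite coefB coef1 coef_x //.
case: eqP => [->|_]; first by rewrite subr0 expr0 divr1.
by rewrite sub0r exprS mulN1r mulNr opprK.
Qed.

Lemma coef_epow N l j : (j <= N)%N ->
  ((1 - one_minus_exp_neg_trunc N) ^+ l)`_j = (- (l%:R)) ^+ j / (j`!)%:R.
Proof.
elim: l j => [|l IH] j hj.
  rewrite expr0 coef1 oppr0 expr0n; case: eqP => [->|_]; first by rewrite divr1.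
  by rewrite mul0r.
rewrite exprSr coefM.
have -> : (- (l.+1%:R : rat)) = (-1) + (- (l%:R)) by rewrite -natr1; ring.
rewrite (exprDn (-1 : rat)) mulr_suml; apply: eq_bigr => i _.
have hi : (i <= j)%N by rewrite -ltnS.
rewrite IH ?(leq_trans hi) // coef_e ?(leq_trans (leq_subr _ _)) //.
have hb := bin_fact hi.
have hb' : (j`!)%:R = ('C(j, i))%:R * ((i`!)%:R * ((j - i)`!)%:R) :> rat by rewrite -!natrM hb.
rewrite hb' -mulr_natr.
have := fact_neq0 i; have := fact_neq0 (j - i).
have : ('C(j, i))%:R != 0 :> rat by rewrite pnatr_eq0 -lt0n bin_gt0.
move=> h1 h2 h3; field.
by rewrite h1 h2 h3.
Qed.

Lemma coef_sign k (p : {poly rat}) i : ((-1) ^+ k * p)`_i = (-1) ^+ k * p`_i.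
Proof.
elim: k => [|k IH]; first by rewrite !expr0 !mul1r.
by rewrite !exprS !mulN1r mulNr coefN IH mulNr.
Qed.

Lemma coef_xpow N m : (N`!)%:R * ((one_minus_exp_neg_trunc N) ^+ m)`_N =
  \sum_(l < m.+1) (-1) ^+ l * ('C(m, l))%:R * (- (l%:R)) ^+ N.
Proof.
set x := one_minus_exp_neg_trunc N.
have -> : x = 1 - (1 - x) by rewrite subKr.
rewrite exprBn coef_sum mulr_sumr; apply: eq_bigr => l _.
rewrite coefMn expr1n mulr1 coef_sign coef_epow //.
rewrite -mulr_natr; field; exact: fact_neq0.
Qed.

Lemma u_rat m N : (u m N)%:~R = \sum_(l < m.+1) (-1) ^+ l * ('C(m, l))%:R * (- (l%:R)) ^+ N :> rat.
Proof.
rewrite /u /W rmorph_sum; apply: eq_bigr => l _.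
by rewrite !rmorphM /= !rmorphXn /= !rmorphN /= !rmorph_nat.
Qed.

Lemma polyBneg_D K N : polyBneg K N = (D N K)%:~R.
Proof.
rewrite /polyBneg coef_sum big_mkord mulr_sumr /D rmorph_sum; apply: eq_bigr => m _.
rewrite coefZ mulrCA coef_xpow -u_rat rmorphM /= rmorphXn /= rmorph_nat.
by rewrite mulrC natrX.
Qed.

Unset Implicit Arguments.

Lemma key k M n : (0 < k)%N -> (0 < M)%N ->
  (forall p : nat, p \in primes M -> (logn p M <= n)%N) ->
  (M%:Z %| \sum_(i < totient M) D k (n + i))%Z.
Proof.
move=> hk hM hn.
rewrite /D exchange_big /=; apply: rpred_sum => m _.
rewrite -mulr_sumr.
have -> : \sum_(i < totient M) (m.+1%:R : int) ^+ (n + i)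
   = ((\sum_(i < totient M) m.+1 ^ (n + i))%N)%:R.
  by rewrite natr_sum; apply: eq_bigr => i _; rewrite natrX.
rewrite dvdzE abszM natz absz_nat /=.
apply: keyC => //.
  by move=> m0; rewrite m0; case: (k) hk => // k' _; rewrite u_0S.
by have := u_fact m k; rewrite dvdzE absz_nat.
Qed.

Theorem corollary3p7 (k M n : nat) (hk : (0 < k)%N) (hM : (0 < M)%N)
  (hn : forall p : nat, p \in primes M -> (logn p M <= n)%N) :
  (exists z : int, \sum_(i < totient M) polyBneg k (n + i) = M%:R * z%:~R) /\
  (exists z : int, \sum_(i < totient M) polyBneg (n + i) k = M%:R * z%:~R).
Proof.
have [q hq] := dvdzP (key k M n hk hM hn).
have E : \sum_(i < totient M) ((D k (n + i))%:~R : rat) = M%:R * q%:~R.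
  rewrite -rmorph_sum /= hq rmorphM /= mulrC; congr (_ * _).
split; exists q; rewrite -E; apply: eq_bigr => i _; rewrite polyBneg_D //.
by rewrite D_sym.
Qed.
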